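(* Let $\mathbf{C}$ be a small groupoid with set of objects $\mathbf{C_0}$, set of morphisms $\mathbf{C_1}$, and source and target maps $s,t \colon \mathbf{C_1} \to \mathbf{C_0}$. Let $u$ be an object of $\mathbf{C}$ and let $h \colon \mathbf{C_0} \to \mathbf{C_1}$ be a map assigning to each object $e$ a morphism $h(e) \colon e \to u$, with $h(u) = \mathrm{id}_u$. For objects $e,e'$ put $h_{e,e'} = h(e')^{-1}h(e) \colon e \to e'$, and for each bijection $\sigma$ of $\mathbf{C_0}$ let $h_\sigma$ be the bisection $e \mapsto h_{e,\sigma(e)}$. Let $N$ be the subgroup of $\mathrm{Bis}(\mathbf{C})$ consisting of the bisections $n$ with $t\circ n = \mathrm{id}_{\mathbf{C_0}}$ (so $N \cong \prod_{e} \mathrm{End}(e)$), and let $H = \{h_\sigma : \sigma \text{ a bijection of } \mathbf{C_0}\}$. Then $\mathrm{Bis}(\mathbf{C})$ is generated by its subgroups $N$ and $H$; moreover $H$ acts on $N$ (by group automorphisms), and $\mathrm{Bis}(\mathbf{C})$ is isomorphic to the corresponding semidirect product $N \rtimes H$.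
   Context: A groupoid is a category in which every morphism is invertible. A bisection of $\mathbf{C}$ is a map $b \colon \mathbf{C_0} \to \mathbf{C_1}$ such that $s \circ b$ is the identity of $\mathbf{C_0}$ and $t \circ b \colon \mathbf{C_0} \to \mathbf{C_0}$ is a bijection. Bisections form a group $\mathrm{Bis}(\mathbf{C})$ under the composition $(b' \star b)(e) = b'(t(b(e))) \circ b(e)$, with inverse $b^{-1}(e) = b((t\circ b)^{-1}(e))^{-1}$. The set $H$ of bisections $h_\sigma$ is a subgroup of $\mathrm{Bis}(\mathbf{C})$ isomorphic to the group of bijections of $\mathbf{C_0}$. *)

(* Defs.v *)
From Stdlib Require Import ClassicalEpsilon.
Set Implicit Arguments.

(* A small groupoid: objects, morphisms, source/target, composition
   [comp g f] = g o f (meaningful when tgt f = src g), identities, inverses. *)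
Record groupoid := Groupoid {
  Ob : Type;
  Mor : Type;
  src : Mor -> Ob;
  tgt : Mor -> Ob;
  comp : Mor -> Mor -> Mor;
  idm : Ob -> Mor;
  inv : Mor -> Mor;
  src_comp : forall g f, tgt f = src g -> src (comp g f) = src f;
  tgt_comp : forall g f, tgt f = src g -> tgt (comp g f) = tgt g;
  comp_assoc : forall h g f, tgt f = src g -> tgt g = src h ->
      comp h (comp g f) = comp (comp h g) f;
  src_idm : forall e, src (idm e) = e;
  tgt_idm : forall e, tgt (idm e) = e;
  comp_idl : forall f, comp (idm (tgt f)) f = f;
  comp_idr : forall f, comp f (idm (src f)) = f;
  src_inv : forall f, src (inv f) = tgt f;
  tgt_inv : forall f, tgt (inv f) = src f;
  comp_invl : forall f, comp (inv f) f = idm (src f);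
  comp_invr : forall f, comp f (inv f) = idm (tgt f)
}.
Arguments src {_}. Arguments tgt {_}. Arguments comp {_}. Arguments idm {_}. Arguments inv {_}.

Section Bisections.
Context {C : groupoid}.

Definition bijective_map (A : Type) (f : A -> A) :=
  exists g : A -> A, (forall x, g (f x) = x) /\ (forall y, f (g y) = y).

Definition is_bis (b : Ob C -> Mor C) : Prop :=
  (forall e, src (b e) = e) /\ bijective_map (fun e => tgt (b e)).

Definition bis_mul (b' b : Ob C -> Mor C) : Ob C -> Mor C :=
  fun e => comp (b' (tgt (b e))) (b e).

Definition bis_one : Ob C -> Mor C := fun e => idm e.

(* (t o b)^{-1}, chosen classically (fallback e when no preimage exists) *)
Definition tb_inv (b : Ob C -> Mor C) (e : Ob C) : Ob C :=
  match excluded_middle_informative (exists x, tgt (b x) = e) with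
  | left H => proj1_sig (constructive_indefinite_description _ H)
  | right _ => e
  end.

Definition bis_inv (b : Ob C -> Mor C) : Ob C -> Mor C :=
  fun e => inv (b (tb_inv b e)).

Inductive gen (S : (Ob C -> Mor C) -> Prop) : (Ob C -> Mor C) -> Prop :=
  | gen_in : forall x, S x -> gen S x
  | gen_one : gen S bis_one
  | gen_mul : forall x y, gen S x -> gen S y -> gen S (bis_mul x y)
  | gen_inv : forall x, gen S x -> gen S (bis_inv x).

Definition inN (n : Ob C -> Mor C) : Prop :=
  is_bis n /\ forall e, tgt (n e) = e.

Definition h_sigma (h : Ob C -> Mor C) (sigma : Ob C -> Ob C) : Ob C -> Mor C :=
  fun e => comp (inv (h (sigma e))) (h e).

Definition inH (h : Ob C -> Mor C) (k : Ob C -> Mor C) : Prop :=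
  exists sigma, bijective_map sigma /\ k = h_sigma h sigma.

Definition act (k n : Ob C -> Mor C) : Ob C -> Mor C :=
  bis_mul (bis_mul k n) (bis_inv k).

Definition sd_mul (p q : (Ob C -> Mor C) * (Ob C -> Mor C))
  : (Ob C -> Mor C) * (Ob C -> Mor C) :=
  (bis_mul (fst p) (act (snd p) (fst q)), bis_mul (snd p) (snd q)).

End Bisections.
Arguments bis_one C : clear implicits.

(* Main.v *)
Require Import Defs.
From Stdlib Require Import ClassicalEpsilon FunctionalExtensionality.
Set Implicit Arguments.
Unset Strict Implicit.

Section Aux.
Context {C : groupoid}.
Implicit Types a b c k n m : Ob C -> Mor C.

Lemma tb_inv_spec b : bijective_map (fun e => tgt (b e)) ->
  forall e, tgt (b (tb_inv b e)) = e.
Proof.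
  intros [g [Hg1 Hg2]] e. unfold tb_inv.
  destruct (excluded_middle_informative _) as [H|H].
  - exact (proj2_sig (constructive_indefinite_description _ H)).
  - exfalso; apply H; exists (g e); apply Hg2.
Qed.

Lemma tb_inv_tgt b : bijective_map (fun e => tgt (b e)) ->
  forall x, tb_inv b (tgt (b x)) = x.
Proof.
  intros Hb x. pose proof (tb_inv_spec Hb (tgt (b x))) as E.
  destruct Hb as [g [Hg1 Hg2]].
  simpl in Hg1. apply (f_equal g) in E. rewrite !Hg1 in E. exact E.
Qed.

Lemma tgt_binv b : is_bis b -> forall e, tgt (bis_inv b e) = tb_inv b e.
Proof. intros [Hs _] e. unfold bis_inv. rewrite tgt_inv. apply Hs. Qed.

Lemma src_binv b : is_bis b -> forall e, src (bis_inv b e) = e.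
Proof. intros [Hs Hb] e. unfold bis_inv. rewrite src_inv. apply tb_inv_spec; auto. Qed.

Lemma tgt_bmul a b : (forall e, src (a e) = e) -> forall e,
  tgt (bis_mul a b e) = tgt (a (tgt (b e))).
Proof. intros Ha e. unfold bis_mul. rewrite tgt_comp; auto. Qed.

Lemma src_bmul a b : (forall e, src (a e) = e) -> forall e,
  src (bis_mul a b e) = src (b e).
Proof. intros Ha e. unfold bis_mul. rewrite src_comp; auto. Qed.

Lemma inv_bis b : is_bis b -> is_bis (bis_inv b).
Proof.
  intros Hb. split. apply src_binv; auto.
  exists (fun e => tgt (b e)). split; intro x; simpl.
  - rewrite tgt_binv by auto. apply tb_inv_spec; apply Hb.
  - rewrite tgt_binv by auto. apply tb_inv_tgt; apply Hb.
Qed.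

Lemma mul_bis a b : is_bis a -> is_bis b -> is_bis (bis_mul a b).
Proof.
  intros [Ha [ga [Ha1 Ha2]]] [Hb [gb [Hb1 Hb2]]]. split.
  - intro e. rewrite src_bmul; auto.
  - exists (fun e => gb (ga e)). split; intro x; rewrite ?tgt_bmul; auto.
    + rewrite Ha1, Hb1; auto.
    + rewrite Hb2, Ha2; auto.
Qed.

Lemma one_bis : is_bis (bis_one C).
Proof.
  split. intro; apply src_idm. exists (fun e => e). unfold bis_one.
  split; intro; rewrite tgt_idm; auto.
Qed.

Lemma mul_assoc a b c : is_bis a -> is_bis b ->
  bis_mul a (bis_mul b c) = bis_mul (bis_mul a b) c.
Proof.
  intros [Ha _] [Hb _]. apply functional_extensionality; intro e.
  unfold bis_mul. rewrite tgt_comp by (rewrite Hb; auto).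
  rewrite comp_assoc; auto; rewrite Hb; auto.
Qed.

Lemma mul_one_l b : bis_mul (bis_one C) b = b.
Proof. apply functional_extensionality; intro e. unfold bis_mul, bis_one. apply comp_idl. Qed.

Lemma mul_one_r b : is_bis b -> bis_mul b (bis_one C) = b.
Proof.
  intros [Hs _]. apply functional_extensionality; intro e. unfold bis_mul, bis_one.
  rewrite tgt_idm. rewrite <- (Hs e) at 2. rewrite comp_idr. reflexivity.
Qed.

Lemma inv_l b : is_bis b -> bis_mul (bis_inv b) b = bis_one C.
Proof.
  intros [Hs Hb]. apply functional_extensionality; intro e. unfold bis_mul, bis_one, bis_inv.
  rewrite tb_inv_tgt by auto. rewrite comp_invl, Hs. reflexivity.
Qed.

Lemma inv_r b : is_bis b -> bis_mul b (bis_inv b) = bis_one C.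
Proof.
  intros HB. apply functional_extensionality; intro e. unfold bis_mul, bis_one.
  rewrite (tgt_binv HB). destruct HB as [Hs Hb]. unfold bis_inv.
  rewrite comp_invr, tb_inv_spec; auto.
Qed.

Lemma inv_unique x y : is_bis x -> is_bis y -> bis_mul x y = bis_one C -> y = bis_inv x.
Proof.
  intros Hx Hy E.
  rewrite <- (mul_one_l y), <- (inv_l Hx), <- mul_assoc, E, mul_one_r; auto using inv_bis.
Qed.

Lemma inv_one : bis_inv (bis_one C) = bis_one C.
Proof.
  symmetry. apply inv_unique; auto using one_bis. apply mul_one_l.
Qed.

Lemma cancel_r a b k : is_bis a -> is_bis b -> is_bis k ->
  bis_mul a k = bis_mul b k -> a = b.
Proof.
  intros Ha Hb Hk E.
  rewrite <- (mul_one_r Ha), <- (mul_one_r Hb), <- (inv_r Hk), !mul_assoc, E; auto.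
Qed.

Lemma inH_bis (h : Ob C -> Mor C) (u : Ob C)
  (h_src : forall e, src (h e) = e) (h_tgt : forall e, tgt (h e) = u) k :
  inH h k -> is_bis k /\ exists sigma, k = h_sigma h sigma /\ bijective_map sigma /\
     forall e, tgt (k e) = sigma e.
Proof.
  intros [sigma [Hs ->]].
  assert (T : forall e, tgt (h_sigma h sigma e) = sigma e).
  { intro e. unfold h_sigma. rewrite tgt_comp. rewrite tgt_inv; auto.
    rewrite src_inv, !h_tgt; auto. }
  split.
  - split.
    + intro e. unfold h_sigma. rewrite src_comp; auto. rewrite src_inv, !h_tgt; auto.
    + destruct Hs as [g [G1 G2]]. exists g. split; intro; rewrite T; auto.
  - exists sigma. auto.
Qed.

End Aux.

Global Hint Resolve mul_bis inv_bis one_bis : bis.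

Theorem theorem2 (C : groupoid) (u : Ob C) (h : Ob C -> Mor C)
  (h_src : forall e, src (h e) = e) (h_tgt : forall e, tgt (h e) = u)
  (h_u : h u = idm u) :
  (* Bis(C) is generated by N and H *)
  (forall b, is_bis b -> gen (fun x => inN x \/ inH h x) b)
  (* H acts on N by group automorphisms (via conjugation) *)
  /\ (forall k n, inH h k -> inN n -> inN (act k n))
  /\ (forall k n1 n2, inH h k -> inN n1 -> inN n2 ->
        act k (bis_mul n1 n2) = bis_mul (act k n1) (act k n2))
  /\ (forall k n, inH h k -> inN n -> exists m, inN m /\ act k m = n)
  /\ (forall k m n, inH h k -> inN m -> inN n -> act k m = act k n -> m = n)
  /\ (forall n, inN n -> act (bis_one C) n = n)
  /\ (forall k1 k2 n, inH h k1 -> inH h k2 -> inN n ->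
        act (bis_mul k1 k2) n = act k1 (act k2 n))
  (* Bis(C) is isomorphic to the semidirect product N x| H *)
  /\ exists f : (Ob C -> Mor C) * (Ob C -> Mor C) -> (Ob C -> Mor C),
       (forall p, inN (fst p) -> inH h (snd p) -> is_bis (f p))
       /\ (forall p q, inN (fst p) -> inH h (snd p) -> inN (fst q) -> inH h (snd q) ->
             f p = f q -> p = q)
       /\ (forall b, is_bis b -> exists p, inN (fst p) /\ inH h (snd p) /\ f p = b)
       /\ (forall p q, inN (fst p) -> inH h (snd p) -> inN (fst q) -> inH h (snd q) ->
             f (sd_mul p q) = bis_mul (f p) (f q)).
Proof.
  pose proof (inH_bis h_src h_tgt) as HB.
  assert (DEC : forall b, is_bis b -> exists n k, inN n /\ inH h k /\ bis_mul n k = b).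
  { intros b Hb. pose proof Hb as [Hbs Hbt].
    set (k := h_sigma h (fun e => tgt (b e))).
    assert (Hk : inH h k) by (exists (fun e => tgt (b e)); auto).
    destruct (HB k Hk) as [Kb [sigma [Ek [_ Tk]]]].
    assert (Tk' : forall e, tgt (k e) = tgt (b e)).
    { intro e. unfold k, h_sigma. rewrite tgt_comp. rewrite tgt_inv; auto.
      rewrite src_inv, !h_tgt; auto. }
    exists (bis_mul b (bis_inv k)), k. split; [|split]; auto.
    - split; auto with bis. intro e. rewrite tgt_bmul by auto. rewrite tgt_binv by auto.
      rewrite <- Tk'. apply tb_inv_spec. apply Kb.
    - rewrite <- mul_assoc, inv_l, mul_one_r; auto with bis. }
  assert (ACT : forall k n : Ob C -> Mor C, is_bis k -> inN n -> inN (act k n)).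
  { intros k n Hk [Hn Tn]. unfold act. split; [auto with bis|].
    intro e. pose proof Hk as [Hks Hkt]. pose proof Hn as [Hns _].
    rewrite tgt_bmul by (apply mul_bis; auto).
    rewrite tgt_bmul, Tn, tgt_binv by auto. apply tb_inv_spec; auto. }
  assert (ONE : forall n : Ob C -> Mor C, is_bis n -> act (bis_one C) n = n).
  { intros n Hn. unfold act. rewrite inv_one, mul_one_l, mul_one_r; auto. }
  split; [|split; [|split; [|split; [|split; [|split; [|split]]]]]].
  - intros b Hb. destruct (DEC b Hb) as [n [k [Hn [Hk E]]]]. rewrite <- E.
    apply gen_mul; apply gen_in; auto.
  - intros k n Hk Hn. apply ACT; auto. apply (HB k Hk).
  - intros k n1 n2 Hk [Hn1 _] [Hn2 _]. destruct (HB k Hk) as [Kb _]. unfold act.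
    rewrite <- !mul_assoc; auto with bis. f_equal.
    rewrite (@mul_assoc C (bis_inv k) k) by auto with bis.
    rewrite inv_l, mul_one_l; auto.
  - intros k n Hk [Hn Tn]. destruct (HB k Hk) as [Kb _]. pose proof Kb as [Ks Kt].
    exists (bis_mul (bis_mul (bis_inv k) n) k). split.
    + split; auto with bis. intro e.
      rewrite tgt_bmul by (apply mul_bis; auto with bis; apply inv_bis; auto).
      rewrite tgt_bmul by (apply inv_bis; auto). rewrite Tn, tgt_binv by auto.
      apply tb_inv_tgt; auto.
    + unfold act. rewrite <- !mul_assoc; auto with bis.
      rewrite inv_r, mul_one_r by auto with bis.
      rewrite !mul_assoc, inv_r, mul_one_l; auto with bis.
  - intros k m n Hk [Hm _] [Hn _] E. destruct (HB k Hk) as [Kb _].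
    unfold act in E. apply cancel_r in E; auto with bis.
    assert (E2 := f_equal (bis_mul (bis_inv k)) E).
    rewrite !mul_assoc, inv_l, !mul_one_l in E2; auto with bis.
  - intros n [Hn _]. apply ONE; auto.
  - intros k1 k2 n H1 H2 [Hn _]. destruct (HB k1 H1) as [K1 _]. destruct (HB k2 H2) as [K2 _].
    unfold act.
    assert (I : bis_inv (bis_mul k1 k2) = bis_mul (bis_inv k2) (bis_inv k1)).
    { symmetry. apply inv_unique; auto with bis.
      rewrite <- !mul_assoc; auto with bis.
      rewrite (@mul_assoc C k2), inv_r, mul_one_l, inv_r; auto with bis. }
    rewrite I. rewrite !mul_assoc; auto with bis.
  - exists (fun p => bis_mul (fst p) (snd p)). split; [|split; [|split]].
    + intros [n k] [Hn _] Hk. simpl. destruct (HB k Hk) as [Kb _]. auto with bis.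
    + intros [n1 k1] [n2 k2] [Hn1 Tn1] Hk1 [Hn2 Tn2] Hk2. simpl. intro E.
      destruct (HB k1 Hk1) as [K1 [s1 [E1 [_ T1]]]].
      destruct (HB k2 Hk2) as [K2 [s2 [E2 [_ T2]]]].
      assert (S : s1 = s2).
      { apply functional_extensionality; intro e. rewrite <- T1, <- T2.
        transitivity (tgt (bis_mul n1 k1 e)).
        { rewrite tgt_bmul by apply Hn1. rewrite Tn1. reflexivity. }
        rewrite E, tgt_bmul by apply Hn2. rewrite Tn2. reflexivity. }
      assert (k1 = k2) by (rewrite E1, E2, S; reflexivity). subst k2.
      f_equal; [apply cancel_r with k1; auto; rewrite H in E |- *; exact E | exact H].
    + intros b Hb. destruct (DEC b Hb) as [n [k [Hn [Hk E]]]]. exists (n, k). auto.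
    + intros [n1 k1] [n2 k2] [Hn1 _] Hk1 [Hn2 _] Hk2. simpl.
      destruct (HB k1 Hk1) as [K1 _]. destruct (HB k2 Hk2) as [K2 _].
      unfold sd_mul, act; simpl.
      rewrite <- !mul_assoc; auto with bis. f_equal. f_equal. f_equal.
      rewrite (@mul_assoc C (bis_inv k1)), inv_l, mul_one_l; auto with bis.
Qed.
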